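(* Let $\gamma_1,\dots,\gamma_u$ be real numbers, let $k_1<k_2<\cdots<k_t$ be positive integers, put $\underline{k}=\{k_1,\dots,k_t\}$, and let $m_0$ be a positive integer. Consider the pairs $(k,m)$ with $k\in\underline{k}$ and integers $m\ge m_0$, ordered as $(k_1,m_0),\dots,(k_t,m_0),(k_1,m_0+1),\dots,(k_t,m_0+1),(k_1,m_0+2),\dots$. Assume that for each such pair $(k,m)$ there exist a linear form $r(k,m)=h_0+\sum_{i=1}^u h_i\gamma_i$ with $h_i=h_i(k,m)\in\mathbb{Z}$ and a positive integer $Q_{k,m}$ such that \begin{align*} &c_1(k)Q_{k,m}\le\max_{1\le i\le u}|h_i|\le c_2(k)Q_{k,m},\\ &Q_{k_j,m}<Q_{k_{j+1},m}\le C_1(\underline{k})Q_{k_j,m}^{\theta(j)},\quad j=1,\dots,t-1,\\ &Q_{k_t,m}<Q_{k_1,m+1}\le C_1(\underline{k})Q_{k_t,m}^{\theta(t)},\\ &c_3(k)Q_{k,m}^{-\alpha(k)}\le|r(k,m)|\le c_4(k)Q_{k,m}^{-\beta(k)}, \end{align*} where $c_i(k)$ and $C_1(\underline{k})$ are positive constants depending only on $k$ and on $\underline{k}$ respectively, and $\theta(j)\ge1$, $\alpha(k_j)\ge\beta(k_j)>0$ are constants, all independent of $m$. Then there exist positive constants $Q_0=Q_0(\underline{k},m_0)$ and $C=C(\underline{k},m_0)$ such that for all rational numbers $p_1/q,\dots,p_u/q$ (with $p_i\in\mathbb{Z}$, $q\in\mathbb{Z}$) with $q\ge Q_0$, \[\max_{1\le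 i\le u}\left|\gamma_i-\frac{p_i}{q}\right|>Cq^{-\mu},\qquad\text{where }\mu=\max_{1\le j\le t}\theta(j)\frac{\alpha(k_{j+1})+1}{\beta(k_j)}\text{ and }\alpha(k_{t+1}):=\alpha(k_1).\] *)

(* Defs.v *)
From Stdlib Require Import Reals ZArith.
Open Scope R_scope.

(* max1 f n = max_{1 <= i <= n} f i  (meaningful for n >= 1; max1 f 0 = f 1). *)
Fixpoint max1 (f : nat -> R) (n : nat) : R :=
  match n with
  | O => f 1%nat
  | S O => f 1%nat
  | S n' => Rmax (max1 f n') (f n)
  end.

Fixpoint lin_form (h : nat -> Z) (gamma : nat -> R) (u : nat) : R :=
  match u with
  | O => IZR (h 0%nat)
  | S u' => lin_form h gamma u' + IZR (h u) * gamma u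
  end.

(* Main.v *)
Require Import Defs.
From Stdlib Require Import Reals ZArith Lra Lia Psatz Classical.
Open Scope R_scope.

Definition sc (t i : nat) : nat := if Nat.ltb i t then S i else 1%nat.

Lemma sc_range t i : (1 <= i <= t)%nat -> (1 <= sc t i <= t)%nat.
Proof. unfold sc; intros H. destruct (Nat.ltb_spec i t); lia. Qed.

Lemma cycle (t : nat) (x a b : nat -> R) (mu : R) :
  (forall i, (1 <= i <= t)%nat -> 0 < b i <= a i) ->
  (forall i, (1 <= i <= t)%nat -> x i * b i >= 1) ->
  (forall i, (1 <= i <= t)%nat -> x i * a (sc t i) + x i <= mu) ->
  forall j, (1 <= j <= t)%nat -> 1 + x j <= mu.
Proof.
  intros Hab Hx Hm j Hj.
  apply Rnot_lt_le; intro Hc.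
  assert (Hxpos : forall i, (1 <= i <= t)%nat -> 0 < x i).
  { intros i Hi. specialize (Hab i Hi). specialize (Hx i Hi).
    destruct (Rle_or_lt (x i) 0); [|lra]. nra. }
  assert (Step : forall i, (1 <= i <= t)%nat -> x j <= x i -> x i < x (sc t i)).
  { intros i Hi Hle. pose proof (sc_range t i Hi) as Hs.
    specialize (Hm i Hi). specialize (Hab _ Hs). specialize (Hx _ Hs).
    pose proof (Hxpos i Hi). pose proof (Hxpos _ Hs).
    assert (x i * a (sc t i) < 1) by lra.
    assert (x i * b (sc t i) < 1) by nra.
    nra. }
  assert (PA : forall d, (j + d <= t)%nat -> x j <= x (j + d)%nat).
  { induction d as [|d IH]; intros Hd.
    - rewrite Nat.add_0_r; lra.
    - assert (Hi : (1 <= j + d <= t)%nat) by lia.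
      pose proof (Step _ Hi (IH ltac:(lia))).
      unfold sc in H. destruct (Nat.ltb_spec (j + d) t); [|lia].
      specialize (IH ltac:(lia)). replace (j + S d)%nat with (S (j + d)) by lia. lra. }
  assert (Xt : x j <= x t).
  { pose proof (PA (t - j)%nat ltac:(lia)) as HH. replace (j + (t - j))%nat with t in HH by lia. exact HH. }
  assert (X1 : x j < x 1%nat).
  { assert (Hi : (1 <= t <= t)%nat) by lia.
    pose proof (Step t Hi Xt). unfold sc in H.
    destruct (Nat.ltb_spec t t); [lia|]. lra. }
  assert (PB : forall d, (1 + d <= j)%nat -> x j < x (1 + d)%nat).
  { induction d as [|d IH]; intros Hd.
    - exact X1.
    - assert (Hi : (1 <= 1 + d <= t)%nat) by lia.
      pose proof (Step _ Hi (Rlt_le _ _ (IH ltac:(lia)))).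
      unfold sc in H. destruct (Nat.ltb_spec (1 + d) t); [|lia].
      specialize (IH ltac:(lia)).
      replace (1 + S d)%nat with (S (1 + d)) by lia. lra. }
  specialize (PB (j - 1)%nat ltac:(lia)).
  replace (1 + (j - 1))%nat with j in PB by lia. lra.
Qed.

Lemma fin_choice (n : nat) (P : nat -> R -> Prop) :
  (forall j D D', P j D -> 0 < D' <= D -> P j D') ->
  (forall j, (1 <= j <= n)%nat -> exists D, 0 < D /\ P j D) ->
  exists D, 0 < D /\ forall j, (1 <= j <= n)%nat -> P j D.
Proof.
  intros Hmon. induction n as [|n IH]; intros H.
  - exists 1. split; [lra| intros; lia].
  - destruct IH as [D1 [HD1 HP1]]; [intros; apply H; lia|].
    destruct (H (S n) ltac:(lia)) as [D2 [HD2 HP2]].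
    exists (Rmin D1 D2). split; [apply Rmin_case; lra|].
    intros j Hj. destruct (Nat.eq_dec j (S n)) as [->|Hne].
    + eapply Hmon; [exact HP2|]. split; [apply Rmin_case; lra| apply Rmin_r].
    + eapply Hmon; [apply HP1; lia|]. split; [apply Rmin_case; lra| apply Rmin_l].
Qed.

Lemma Rpow_pos x y : 0 < Rpower x y.
Proof. unfold Rpower; apply exp_pos. Qed.

Lemma Rpow_neg x y : Rpower x (- y) = / Rpower x y.
Proof. apply Rpower_Ropp. Qed.

Lemma key (c40 b0 th0 C1 al c3 w : R) :
  0 < c40 -> 0 < b0 -> 0 < th0 -> 0 < C1 -> 0 < al -> 0 < c3 -> 0 < w ->
  exists D, 0 < D /\ forall mu X Y q d r A,
    mu >= th0 * (al + 1) / b0 -> mu >= 1 + th0 / b0 ->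
    1 <= X -> 1 <= Y -> 1 <= q ->
    / (2 * q) <= c40 * Rpower X (- b0) ->
    Y <= C1 * Rpower X th0 ->
    c3 * Rpower Y (- al) <= Rabs r ->
    q * Rabs r < / 2 ->
    Rabs (q * r - IZR A) <= w * Y * q * d ->
    D * Rpower q (- mu) <= d.
Proof.
  intros H40 Hb0 Hth HC1 Hal Hc3 Hw.
  set (e := th0 / b0).
  set (K := C1 * Rpower (2 * c40) e).
  assert (HK : 0 < K) by (unfold K; pose proof (Rpow_pos (2*c40) e); nra).
  exists (Rmin (c3 / w * Rpower K (- (al + 1))) (/ (2 * w * K))).
  split.
  { apply Rmin_case.
    - unfold Rdiv. repeat apply Rmult_lt_0_compat; auto using Rpow_pos, Rinv_0_lt_compat.
    - apply Rinv_0_lt_compat, Rmult_lt_0_compat; [lra | exact HK]. }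
  assert (He : 0 < e) by (unfold e; apply Rdiv_lt_0_compat; lra).
  intros mu X Y q d r A Hmu1 Hmu2 HX HY Hq H1 H2 H3 H4 H5.
  assert (S1 : Rpower X b0 <= 2 * c40 * q).
  { rewrite Rpow_neg in H1. pose proof (Rpow_pos X b0) as P.
    apply Rmult_le_compat_r with (r := 2 * q * Rpower X b0) in H1; [|nra].
    replace (/ (2 * q) * (2 * q * Rpower X b0)) with (Rpower X b0) in H1 by (field; lra).
    replace (c40 * / Rpower X b0 * (2 * q * Rpower X b0)) with (2 * c40 * q) in H1
      by (field; lra). exact H1. }
  assert (S2 : Rpower X th0 <= K / C1 * Rpower q e).
  { replace (Rpower X th0) with (Rpower (Rpower X b0) e)
      by (rewrite Rpower_mult; f_equal; unfold e; field; lra).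
    apply Rle_trans with (Rpower (2 * c40 * q) e).
    - apply Rle_Rpower_l; [lra | split; [apply Rpow_pos | exact S1]].
    - rewrite <- Rpower_mult_distr by lra. unfold K. right. field. lra. }
  assert (S3 : Y <= K * Rpower q e).
  { apply Rle_trans with (1 := H2).
    apply Rmult_le_compat_l with (r := C1) in S2; [|lra].
    replace (C1 * (K / C1 * Rpower q e)) with (K * Rpower q e) in S2 by (field; lra).
    exact S2. }
  assert (Pq := Rpow_pos q e).
  destruct (Z.eq_dec A 0) as [HA | HA].
  - subst A. rewrite Rminus_0_r, Rabs_mult, (Rabs_right q) in H5 by lra.
    assert (H6 : Rabs r <= w * Y * d).
    { apply Rmult_le_reg_l with q; [lra|]. nra. }
    assert (S4 : Rpower K (- (al + 1)) * Rpower q (- mu) <= Rpower Y (- al) / Y).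
    { apply Rle_trans with (Rpower K (- (al + 1)) * Rpower q (- (e * (al + 1)))).
      - apply Rmult_le_compat_l; [left; apply Rpow_pos|].
        apply Rle_Rpower; [lra|]. unfold e. unfold Rdiv in *. lra.
      - replace (Rpower Y (- al) / Y) with (Rpower Y (- (al + 1))).
        2:{ rewrite Ropp_plus_distr, Rpower_plus. rewrite (Rpower_Ropp Y 1), Rpower_1 by lra.
            unfold Rdiv. reflexivity. }
        replace (- (e * (al + 1))) with (e * (- (al + 1))) by ring. rewrite <- Rpower_mult.
        rewrite Rpower_mult_distr by (try apply Rpow_pos; lra).
        rewrite !Rpow_neg. apply Rinv_le_contravar; [apply Rpow_pos|].
        apply Rle_Rpower_l; [lra|]. split; [lra|exact S3]. }
    apply Rle_trans with (c3 / w * Rpower K (- (al + 1)) * Rpower q (- mu)).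
    + apply Rmult_le_compat_r; [left; apply Rpow_pos| apply Rmin_l].
    + apply Rle_trans with (c3 / w * (Rpower Y (- al) / Y)).
      * rewrite Rmult_assoc. apply Rmult_le_compat_l; [|exact S4].
        left; apply Rdiv_lt_0_compat; lra.
      * assert (c3 * Rpower Y (- al) <= w * Y * d) by lra.
        apply Rmult_le_reg_l with (w * Y); [nra|].
        replace (w * Y * (c3 / w * (Rpower Y (- al) / Y))) with (c3 * Rpower Y (- al))
          by (field; lra). lra.
  - assert (HA1 : 1 <= Rabs (IZR A)).
    { destruct (Z_lt_le_dec A 0) as [Hn|Hp].
      - rewrite Rabs_left by (apply IZR_lt; lia).
        assert (IZR A <= -1) by (apply IZR_le; lia). lra.
      - rewrite Rabs_right by (apply Rle_ge, IZR_le; lia).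
        apply IZR_le; lia. }
    assert (H6 : / 2 <= w * Y * q * d).
    { assert (Rabs (IZR A) <= Rabs (q * r) + Rabs (q * r - IZR A)).
      { replace (IZR A) with (q * r - (q * r - IZR A)) at 1 by ring.
        apply Rabs_triang_inv2 || (unfold Rminus; eapply Rle_trans; [apply Rabs_triang|];
          rewrite Rabs_Ropp; lra). }
      rewrite Rabs_mult, (Rabs_right q) in H by lra. lra. }
    clear H5 HA HA1 H4 H3 A r.
    assert (S4 : Rpower q (- mu) <= / (q * Rpower q e)).
    { rewrite <- (Rpower_1 q) at 2 by lra. rewrite <- Rpower_plus, <- Rpower_Ropp.
      apply Rle_Rpower; [lra|]. apply Ropp_le_contravar. apply Rge_le. exact Hmu2. }
    apply Rle_trans with (/ (2 * w * K) * Rpower q (- mu)).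
    + apply Rmult_le_compat_r; [left; apply Rpow_pos| apply Rmin_r].
    + apply Rle_trans with (/ (2 * w * K) * / (q * Rpower q e)).
      * apply Rmult_le_compat_l; [left; apply Rinv_0_lt_compat; nra| exact S4].
      * rewrite <- Rinv_mult.
        apply Rle_trans with (/ (2 * w * Y * q)).
        { assert (Hp : 0 < 2 * w * Y * q) by (repeat apply Rmult_lt_0_compat; lra).
          apply Rinv_le_contravar; [exact Hp|].
          assert (w * Y * q <= w * (K * Rpower q e) * q).
          { apply Rmult_le_compat_r; [lra|]. apply Rmult_le_compat_l; lra. }
          lra. }
        assert (Hp : 0 < 2 * w * Y * q) by (repeat apply Rmult_lt_0_compat; lra).
        apply Rmult_le_reg_l with (2 * w * Y * q); [exact Hp|].
        rewrite Rinv_r by lra.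
        replace (2 * w * Y * q * (d)) with (2 * (w * Y * q * d)) by ring. lra.
Qed.

Lemma max1_SS f n : max1 f (S (S n)) = Rmax (max1 f (S n)) (f (S (S n))).
Proof. reflexivity. Qed.

Lemma max1_ge f n i : (1 <= i <= n)%nat -> f i <= max1 f n.
Proof.
  destruct n as [|n]; [lia|]. revert i.
  induction n as [|n IH]; intros i Hi.
  - assert (i = 1%nat) by lia. subst. simpl. lra.
  - rewrite max1_SS. destruct (Nat.eq_dec i (S (S n))) as [->|Hne].
    + apply Rmax_r.
    + eapply Rle_trans; [apply IH; lia | apply Rmax_l].
Qed.

Lemma approx (h p : nat -> Z) (gamma : nat -> R) (qz : Z) (M D : R) (u : nat) :
  let q := IZR qz in 0 < q ->
  (forall i, (1 <= i <= u)%nat -> Rabs (IZR (h i)) <= M) ->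
  (forall i, (1 <= i <= u)%nat -> Rabs (gamma i - IZR (p i) / q) <= D) ->
  exists A : Z, Rabs (q * lin_form h gamma u - IZR A) <= INR u * M * q * D.
Proof.
  intros q Hq. induction u as [|u IH]; intros HM HD.
  - exists (qz * h 0%nat)%Z. simpl. unfold q. rewrite mult_IZR.
    replace (IZR qz * IZR (h 0%nat) - IZR qz * IZR (h 0%nat)) with 0 by ring.
    rewrite Rabs_R0. lra.
  - destruct IH as [A HA]; [intros; apply HM; lia | intros; apply HD; lia |].
    exists (A + h (S u) * p (S u))%Z.
    change (lin_form h gamma (S u)) with (lin_form h gamma u + IZR (h (S u)) * gamma (S u)).
    rewrite plus_IZR, mult_IZR, S_INR.
    replace (q * (lin_form h gamma u + IZR (h (S u)) * gamma (S u)) -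
       (IZR A + IZR (h (S u)) * IZR (p (S u))))
      with ((q * lin_form h gamma u - IZR A) +
            IZR (h (S u)) * (q * (gamma (S u) - IZR (p (S u)) / q))) by (field; lra).
    eapply Rle_trans; [apply Rabs_triang|].
    rewrite Rabs_mult, Rabs_mult, (Rabs_right q) by lra.
    assert (H1 := HM (S u) ltac:(lia)). assert (H2 := HD (S u) ltac:(lia)).
    assert (Rabs (IZR (h (S u))) * (q * Rabs (gamma (S u) - IZR (p (S u)) / q))
            <= M * (q * D)).
    { apply Rmult_le_compat; [apply Rabs_pos| |exact H1|].
      - apply Rmult_le_pos; [lra|apply Rabs_pos].
      - apply Rmult_le_compat_l; lra. }
    lra.
Qed.

Fixpoint sq (t m0 : nat) (N : nat) : nat * nat :=
  match N with
  | O => (1%nat, m0)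
  | S N => let p := sq t m0 N in
           (sc t (fst p), if Nat.ltb (fst p) t then snd p else S (snd p))
  end.

Lemma sq_range t m0 N : (1 <= t)%nat ->
  (1 <= fst (sq t m0 N) <= t)%nat /\ (m0 <= snd (sq t m0 N))%nat.
Proof.
  intros Ht. induction N as [|N IH]; simpl; [lia|].
  unfold sc. destruct (Nat.ltb_spec (fst (sq t m0 N)) t); simpl; lia.
Qed.

Theorem lemma1
  (u t : nat) (hu : (1 <= u)%nat) (ht : (1 <= t)%nat)
  (gamma : nat -> R) (k : nat -> nat)
  (hk_pos : (0 < k 1%nat)%nat)
  (hk_inc : forall j, (1 <= j < t)%nat -> (k j < k (S j))%nat)
  (m0 : nat) (hm0 : (0 < m0)%nat)
  (h : nat -> nat -> nat -> Z) (Q : nat -> nat -> Z)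
  (c1 c2 c3 c4 theta alpha beta : nat -> R) (C1 : R)
  (hC1 : 0 < C1)
  (hc : forall j, (1 <= j <= t)%nat ->
        0 < c1 j /\ 0 < c2 j /\ 0 < c3 j /\ 0 < c4 j)
  (htheta : forall j, (1 <= j <= t)%nat -> 1 <= theta j)
  (hab : forall j, (1 <= j <= t)%nat -> alpha j >= beta j /\ beta j > 0)
  (hQpos : forall j m, (1 <= j <= t)%nat -> (m0 <= m)%nat -> (0 < Q j m)%Z)
  (hh : forall j m, (1 <= j <= t)%nat -> (m0 <= m)%nat ->
        c1 j * IZR (Q j m) <= max1 (fun i => Rabs (IZR (h j m i))) u /\
        max1 (fun i => Rabs (IZR (h j m i))) u <= c2 j * IZR (Q j m))
  (hQj : forall j m, (1 <= j < t)%nat -> (m0 <= m)%nat ->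
        (Q j m < Q (S j) m)%Z /\
        IZR (Q (S j) m) <= C1 * Rpower (IZR (Q j m)) (theta j))
  (hQt : forall m, (m0 <= m)%nat ->
        (Q t m < Q 1%nat (S m))%Z /\
        IZR (Q 1%nat (S m)) <= C1 * Rpower (IZR (Q t m)) (theta t))
  (hr : forall j m, (1 <= j <= t)%nat -> (m0 <= m)%nat ->
        c3 j * Rpower (IZR (Q j m)) (- alpha j) <= Rabs (lin_form (h j m) gamma u) /\
        Rabs (lin_form (h j m) gamma u) <= c4 j * Rpower (IZR (Q j m)) (- beta j)) :
  let alpha' := fun j : nat => if Nat.eqb j (S t) then alpha 1%nat else alpha j in
  let mu := max1 (fun j => theta j * (alpha' (S j) + 1) / beta j) t in
  exists Q0 C : R, 0 < Q0 /\ 0 < C /\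
    forall (p : nat -> Z) (q : Z), IZR q >= Q0 ->
      max1 (fun i => Rabs (gamma i - IZR (p i) / IZR q)) u >
        C * Rpower (IZR q) (- mu).

Proof.
  intros alpha' mu.
  assert (Hsq := fun N => sq_range t m0 N ht).
  assert (Hstep : forall N,
    let j0 := fst (sq t m0 N) in let m := snd (sq t m0 N) in
    let j := fst (sq t m0 (S N)) in let m' := snd (sq t m0 (S N)) in
    (Q j0 m < Q j m')%Z /\ IZR (Q j m') <= C1 * Rpower (IZR (Q j0 m)) (theta j0)).
  { intros N j0 m j m'. destruct (Hsq N) as [Hj Hm].
    unfold j, m', j0, m in *; simpl; unfold sc.
    destruct (Nat.ltb_spec (fst (sq t m0 N)) t).
    - apply hQj; lia.
    - replace (fst (sq t m0 N)) with t by lia. apply hQt; lia. }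
  assert (Hterm : forall j, (1 <= j <= t)%nat ->
            theta j * (alpha (sc t j) + 1) / beta j <= mu).
  { intros j Hj. eapply Rle_trans; [|apply (max1_ge _ t j Hj)]. cbv beta.
    right. unfold alpha', sc. destruct (Nat.ltb_spec j t).
    - destruct (Nat.eqb_spec (S j) (S t)); [lia|reflexivity].
    - destruct (Nat.eqb_spec (S j) (S t)); [reflexivity|lia]. }
  assert (Hcyc : forall j, (1 <= j <= t)%nat -> 1 + theta j / beta j <= mu).
  { apply (cycle t (fun i => theta i / beta i) alpha beta mu).
    - intros i Hi. destruct (hab i Hi). lra.
    - intros i Hi. destruct (hab i Hi). pose proof (htheta i Hi).
      unfold Rdiv. rewrite Rmult_assoc, Rinv_l by lra. lra.
    - intros i Hi. destruct (hab i Hi). rewrite <- (Hterm i Hi). right. field. lra. }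
  assert (Hu : 0 < INR u) by (apply lt_0_INR; lia).
  destruct (fin_choice t (fun j0 D => forall mu X Y q d r A,
    mu >= theta j0 * (alpha (sc t j0) + 1) / beta j0 -> mu >= 1 + theta j0 / beta j0 ->
    1 <= X -> 1 <= Y -> 1 <= q ->
    / (2 * q) <= c4 j0 * Rpower X (- beta j0) ->
    Y <= C1 * Rpower X (theta j0) ->
    c3 (sc t j0) * Rpower Y (- alpha (sc t j0)) <= Rabs r ->
    q * Rabs r < / 2 ->
    Rabs (q * r - IZR A) <= (INR u * c2 (sc t j0)) * Y * q * d ->
    D * Rpower q (- mu) <= d)) as [D [HD HDk]].
  { intros j D D' HP HD' mu0 X Y q d r A a1 a2 a3 a4 a5 a6 a7 a8 a9 a10.
    specialize (HP mu0 X Y q d r A a1 a2 a3 a4 a5 a6 a7 a8 a9 a10).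
    pose proof (Rpow_pos q (- mu0)). nra. }
  { intros j0 Hj0. pose proof (sc_range t j0 Hj0) as Hs.
    destruct (hc j0 Hj0) as [_ [_ [_ H4]]]. destruct (hc _ Hs) as [_ [H2 [H3 _]]].
    destruct (hab j0 Hj0) as [_ Hb]. destruct (hab _ Hs) as [Ha Hb'].
    pose proof (htheta j0 Hj0).
    apply key; try lra. apply Rmult_lt_0_compat; lra. }
  set (v := c4 1%nat * Rpower (IZR (Q 1%nat m0)) (- beta 1%nat)).
  assert (Hv : 0 < v).
  { unfold v. destruct (hc 1%nat ltac:(lia)) as [_ [_ [_ H4]]].
    pose proof (Rpow_pos (IZR (Q 1%nat m0)) (- beta 1%nat)). nra. }
  exists (Rmax 1 (/ (2 * v))), (D / 2).
  split; [eapply Rlt_le_trans; [|apply Rmax_l]; lra|].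
  split; [lra|].
  intros p qz Hqz.
  set (q := IZR qz) in *.
  assert (Hq1 : 1 <= q) by (pose proof (Rmax_l 1 (/ (2 * v))); lra).
  assert (Hqv : / (2 * v) <= q) by (pose proof (Rmax_r 1 (/ (2 * v))); lra).
  set (delta := max1 (fun i => Rabs (gamma i - IZR (p i) / q)) u).
  set (QN := fun N => IZR (Q (fst (sq t m0 N)) (snd (sq t m0 N)))).
  set (P := fun N => c4 (fst (sq t m0 N)) * Rpower (QN N) (- beta (fst (sq t m0 N))) < / (2 * q)).
  assert (HP0 : ~ P 0%nat).
  { unfold P, QN; simpl. fold v. intro Hc.
    assert (1 <= 2 * v * q).
    { apply Rmult_le_compat_l with (r := 2 * v) in Hqv; [|lra].
      rewrite Rinv_r in Hqv by lra. exact Hqv. }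
    assert (2 * q * v < 2 * q * / (2 * q)) by (apply Rmult_lt_compat_l; lra).
    rewrite Rinv_r in H0 by lra. lra. }
  assert (HQge : forall N, (Z.of_nat N + 1 <= Q (fst (sq t m0 N)) (snd (sq t m0 N)))%Z).
  { induction N as [|N IH].
    - simpl. pose proof (hQpos 1%nat m0 ltac:(lia) ltac:(lia)). lia.
    - destruct (Hstep N) as [Hlt _]. lia. }
  assert (HQN1 : forall N, 1 <= QN N).
  { intros N. unfold QN. apply IZR_le. pose proof (HQge N). lia. }
  assert (HPex : exists N, P N).
  { destruct (fin_choice t (fun j D => forall X, X >= / D -> X >= 1 ->
        c4 j * Rpower X (- beta j) < / (2 * q))) as [D1 [HD1 HD1k]].
    - intros j D0 D' HP HD' X HX HX1. apply HP; [|exact HX1].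
      apply Rle_ge. eapply Rle_trans; [|apply Rge_le, HX].
      apply Rinv_le_contravar; lra.
    - intros j Hj. destruct (hc j Hj) as [_ [_ [_ H4]]]. destruct (hab j Hj) as [_ Hb].
      set (Mj := Rpower (2 * q * c4 j + 1) (/ beta j)).
      assert (HMj : 0 < Mj) by apply Rpow_pos.
      exists (/ Mj). split; [apply Rinv_0_lt_compat; lra|].
      intros X HX HX1. rewrite Rinv_inv in HX.
      assert (Hb1 : Rpower Mj (beta j) <= Rpower X (beta j)).
      { apply Rle_Rpower_l; lra. }
      unfold Mj in Hb1. rewrite Rpower_mult, Rinv_l, Rpower_1 in Hb1 by nra.
      rewrite Rpow_neg.
      pose proof (Rpow_pos X (beta j)).
      apply Rmult_lt_reg_l with (2 * q * Rpower X (beta j)); [nra|].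
      replace (2 * q * Rpower X (beta j) * (c4 j * / Rpower X (beta j))) with (2 * q * c4 j)
        by (field; lra).
      replace (2 * q * Rpower X (beta j) * / (2 * q)) with (Rpower X (beta j))
        by (field; lra). lra.
    - destruct (INR_unbounded (/ D1)) as [N HN].
      exists N. unfold P. apply HD1k; [apply Hsq| |apply Rle_ge, HQN1].
      apply Rle_ge. left. eapply Rlt_le_trans; [exact HN|].
      unfold QN. rewrite INR_IZR_INZ. apply IZR_le. pose proof (HQge N). lia. }
  assert (Htr : exists N, ~ P N /\ P (S N)).
  { apply NNPP. intro Hn.
    assert (Hall : forall N, ~ P N).
    { induction N as [|N IH]; [exact HP0|].
      intro HPS. apply Hn. exists N. split; assumption. }
    destruct HPex as [N HN]. exact (Hall N HN). }
  destruct Htr as [N [HnP HPS]].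
  destruct (Hsq N) as [Hj0 Hm0'].
  destruct (Hsq (S N)) as [Hj Hm'].
  destruct (Hstep N) as [_ HY].
  set (j0 := fst (sq t m0 N)) in *.
  set (m := snd (sq t m0 N)) in *.
  assert (Hjj : fst (sq t m0 (S N)) = sc t j0) by reflexivity.
  set (m' := snd (sq t m0 (S N))) in *.
  rewrite Hjj in *.
  set (H := max1 (fun i => Rabs (IZR (h (sc t j0) m' i))) u).
  destruct (approx (h (sc t j0) m') p gamma qz H delta u) as [A HA].
  { fold q; lra. }
  { intros i Hi. apply (max1_ge (fun i => Rabs (IZR (h (sc t j0) m' i))) u i Hi). }
  { intros i Hi. apply (max1_ge (fun i => Rabs (gamma i - IZR (p i) / q)) u i Hi). }
  fold q in HA.
  assert (Hdel0 : 0 <= delta).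
  { eapply Rle_trans; [apply Rabs_pos|].
    apply (max1_ge (fun i => Rabs (gamma i - IZR (p i) / q)) u 1%nat). lia. }
  destruct (hh (sc t j0) m' Hj Hm') as [_ HHc].
  destruct (hr (sc t j0) m' Hj Hm') as [Hr1 Hr2].
  assert (Hkey := HDk j0 Hj0 mu (QN N) (QN (S N)) q delta
                    (lin_form (h (sc t j0) m') gamma u) A).
  unfold QN in Hkey. rewrite Hjj in Hkey. fold j0 m m' in Hkey.
  assert (Hfin : D * Rpower q (- mu) <= delta).
  { apply Hkey.
    - apply Rle_ge, Hterm; exact Hj0.
    - apply Rle_ge, Hcyc; exact Hj0.
    - pose proof (HQN1 N) as X. unfold QN in X. exact X.
    - pose proof (HQN1 (S N)) as X. unfold QN in X. rewrite Hjj in X. exact X.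
    - exact Hq1.
    - apply Rnot_lt_le. exact HnP.
    - exact HY.
    - exact Hr1.
    - unfold P, QN in HPS. rewrite Hjj in HPS. fold m' in HPS.
      apply Rle_lt_trans with (q * (c4 (sc t j0) * Rpower (IZR (Q (sc t j0) m')) (- beta (sc t j0)))).
      + apply Rmult_le_compat_l; lra.
      + apply Rmult_lt_reg_l with (/ q); [apply Rinv_0_lt_compat; lra|].
        rewrite <- Rmult_assoc, Rinv_l, Rmult_1_l by lra.
        replace (/ q * / 2) with (/ (2 * q)) by (field; lra). exact HPS.
    - eapply Rle_trans; [exact HA|].
      assert (0 <= q * delta) by nra.
      assert (INR u * H * (q * delta) <= INR u * (c2 (sc t j0) * IZR (Q (sc t j0) m')) * (q * delta)).
      { apply Rmult_le_compat_r; [lra|]. apply Rmult_le_compat_l; [lra| exact HHc]. }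
      replace (INR u * H * q * delta) with (INR u * H * (q * delta)) by ring.
      replace (INR u * c2 (sc t j0) * IZR (Q (sc t j0) m') * q * delta)
        with (INR u * (c2 (sc t j0) * IZR (Q (sc t j0) m')) * (q * delta)) by ring.
      exact H1. }
  fold delta. pose proof (Rpow_pos q (- mu)). nra.
Qed.
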